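(* Let $\Psi=\{S_j\mid j\in J\}$ be a family of formal power series $S_j:\Sigma^*\to\mathbb{R}^p$ indexed by a finite set $J$. (i) If $\Psi$ admits a stable representation, then $\Psi$ is square summable. (ii) If $\Psi$ is square summable, then every minimal representation of $\Psi$ is stable.
   Context: $\Sigma$ is a finite alphabet, $\Sigma^*$ the set of finite words over $\Sigma$ (including the empty word $\epsilon$). For matrices $A_\sigma$ ($\sigma\in\Sigma$) and $w=\sigma_1\cdots\sigma_k$, write $A_w=A_{\sigma_k}\cdots A_{\sigma_1}$, $A_\epsilon=I$. A representation of $\Psi$ is a tuple $R=(\mathbb{R}^n,\{A_\sigma\}_{\sigma\in\Sigma},B,C)$ with $A_\sigma\in\mathbb{R}^{n\times n}$, $C\in\mathbb{R}^{p\times n}$, $B=\{B_j\in\mathbb{R}^n\mid j\in J\}$, such that $S_j(w)=CA_wB_j$ for all $j\in J$, $w\in\Sigma^*$; its dimension is $n$. $\Psi$ is rational if it has a representation. A representation is minimal if no representation of $\Psi$ has smaller dimension. $R$ is stable if all eigenvalues of $\sum_{\sigma\in\Sigma}A_\sigma^T\otimes A_\sigma^T$ have modulus $<1$. $\Psi$ is square summable if $\sum_{w\in\Sigma^*}\|S_j(w)\|_2^2<\infty$ for every $j\in J$. *)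

(* Defs.v *)
(* Stdlib reals (R_scope). Matrices/vectors are plain functions on
   nat indices; only the indices below the stated dimension are meaningful. *)
From Stdlib Require Import Reals List.
Import ListNotations.
Open Scope R_scope.

Fixpoint rsum (n : nat) (f : nat -> R) : R :=
  match n with
  | O => 0
  | S k => rsum k f + f k
  end.

Definition vec := nat -> R.
Definition mat := nat -> nat -> R.

Definition idm : mat := fun i j => if Nat.eqb i j then 1 else 0.
Definition mmul (n : nat) (X Y : mat) : mat :=
  fun i k => rsum n (fun l => X i l * Y l k).
Definition mvec (n : nat) (X : mat) (v : vec) : vec :=
  fun i => rsum n (fun l => X i l * v l).
Definition trm (X : mat) : mat := fun i j => X j i.
(* Kronecker product of two n x n matrices, an (n*n) x (n*n) matrix,
   row/column index (i1*n + i2) <-> pair (i1,i2) *)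
Definition kron (n : nat) (X Y : mat) : mat :=
  fun a b => X (a / n)%nat (b / n)%nat * Y (a mod n)%nat (b mod n)%nat.

(* Alphabet Sigma = {0,...,m-1}; a word is a list of letters.
   The word sigma_1 ... sigma_k is the list [sigma_1; ...; sigma_k]. *)
Definition word_over (m : nat) (w : list nat) : Prop :=
  Forall (fun s => (s < m)%nat) w.

(* A_w = A_{sigma_k} ... A_{sigma_1}, A_eps = I *)
Fixpoint Aw (n : nat) (A : nat -> mat) (w : list nat) : mat :=
  match w with
  | [] => idm
  | s :: w' => mmul n (Aw n A w') (A s)
  end.

(* Family Psi = {S_j | j in J}, J = {0,...,q-1}; S j w : R^p (indices < p).
   (n, A, B, C) is a representation of Psi: A s (s < m) are n x n,
   B j in R^n (j < q), C is p x n, and S_j(w) = C A_w B_j. *)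
Definition is_rep (m p q : nat) (S : nat -> list nat -> vec)
  (n : nat) (A : nat -> mat) (B : nat -> vec) (C : mat) : Prop :=
  forall j w, (j < q)%nat -> word_over m w ->
    forall i, (i < p)%nat ->
      S j w i = mvec n C (mvec n (Aw n A w) (B j)) i.

Definition minimal_rep (m p q : nat) (S : nat -> list nat -> vec)
  (n : nat) (A : nat -> mat) (B : nat -> vec) (C : mat) : Prop :=
  is_rep m p q S n A B C /\
  forall n' A' B' C', is_rep m p q S n' A' B' C' -> (n <= n')%nat.

Definition stab_mat (m n : nat) (A : nat -> mat) : mat :=
  fun a b => rsum m (fun s => kron n (trm (A s)) (trm (A s)) a b).

(* lambda = a + i b is a (complex) eigenvalue of the real N x N matrix M:
   there is a nonzero complex vector x + i y with M (x + i y) = lambda (x + i y). *)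
Definition is_eigenvalue (N : nat) (M : mat) (a b : R) : Prop :=
  exists x y : vec,
    (exists k, (k < N)%nat /\ (x k <> 0 \/ y k <> 0)) /\
    forall i, (i < N)%nat ->
      mvec N M x i = a * x i - b * y i /\
      mvec N M y i = b * x i + a * y i.

Definition stable (m n : nat) (A : nat -> mat) : Prop :=
  forall a b, is_eigenvalue (n * n) (stab_mat m n A) a b -> a * a + b * b < 1.

Definition sqnorm (p : nat) (v : vec) : R := rsum p (fun i => v i * v i).

(* square summable: for every j, the nonnegative series
   sum_{w in Sigma^*} ||S_j(w)||^2 is finite, i.e. its finite partial sums
   (over finite sets of distinct words) are bounded. *)
Definition square_summable (m p q : nat) (S : nat -> list nat -> vec) : Prop :=
  forall j, (j < q)%nat ->
    exists K : R, forall L : list (list nat),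
      NoDup L -> Forall (word_over m) L ->
      fold_right (fun w acc => sqnorm p (S j w) + acc) 0 L <= K.

(* Main.v *)
Require Import Defs.
From Stdlib Require Import Reals List Lra Lia Psatz Classical Arith FunctionalExtensionality FinFun.
Import ListNotations.
Open Scope R_scope.

Lemma rsum_ext n f g : (forall i, (i < n)%nat -> f i = g i) -> rsum n f = rsum n g.
Proof. induction n; simpl; intros H; auto. rewrite IHn by (intros; apply H; lia). rewrite H by lia. reflexivity. Qed.
Lemma rsum_plus n f g : rsum n (fun i => f i + g i) = rsum n f + rsum n g.
Proof. induction n; simpl; [lra|rewrite IHn; lra]. Qed.
Lemma rsum_scal n c f : rsum n (fun i => c * f i) = c * rsum n f.
Proof. induction n; simpl; [lra|rewrite IHn; lra]. Qed.
Lemma rsum_scal_r n c f : rsum n (fun i => f i * c) = rsum n f * c.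
Proof. induction n; simpl; [lra|rewrite IHn; lra]. Qed.
Lemma rsum_0 n : rsum n (fun _ => 0) = 0.
Proof. induction n; simpl; [lra|rewrite IHn; lra]. Qed.
Lemma rsum_opp n f : rsum n (fun i => - f i) = - rsum n f.
Proof. induction n; simpl; [lra|rewrite IHn; lra]. Qed.
Lemma rsum_swap n k f : rsum n (fun i => rsum k (fun j => f i j)) = rsum k (fun j => rsum n (fun i => f i j)).
Proof.
  induction n; simpl. - rewrite rsum_0; auto.
  - rewrite IHn, <- rsum_plus. reflexivity.
Qed.
Lemma rsum_le n f g : (forall i, (i < n)%nat -> f i <= g i) -> rsum n f <= rsum n g.
Proof. induction n; simpl; intros H; [lra|]. assert (f n <= g n) by (apply H; lia).
  assert (rsum n f <= rsum n g) by (apply IHn; intros; apply H; lia). lra. Qed.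
Lemma rsum_nonneg n f : (forall i, (i < n)%nat -> 0 <= f i) -> 0 <= rsum n f.
Proof. intros H. rewrite <- (rsum_0 n). apply rsum_le; auto. Qed.
Lemma rsum_abs n f : Rabs (rsum n f) <= rsum n (fun i => Rabs (f i)).
Proof. induction n; simpl. - rewrite Rabs_R0; lra.
  - eapply Rle_trans; [apply Rabs_triang|]. lra. Qed.
Lemma rsum_add n k f : rsum (n + k) f = rsum n f + rsum k (fun i => f (n + i)%nat).
Proof. induction k; simpl. - rewrite Nat.add_0_r; lra.
  - rewrite Nat.add_succ_r; simpl; rewrite IHk; lra. Qed.
Lemma rsum_mul n k f : rsum (k * n) f = rsum k (fun i => rsum n (fun j => f (i * n + j)%nat)).
Proof. induction k; simpl; auto.
  rewrite Nat.add_comm, rsum_add, IHk. reflexivity. Qed.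
Lemma rsum_delta n i g : (i < n)%nat -> rsum n (fun l => if Nat.eqb l i then g l else 0) = g i.
Proof.
  induction n; intros H; [lia|]. simpl.
  destruct (Nat.eq_dec i n) as [->|Hne].
  - rewrite Nat.eqb_refl. rewrite (rsum_ext _ _ (fun _ => 0)). rewrite rsum_0; lra.
    intros l Hl. destruct (Nat.eqb_spec l n); [lia|auto].
  - rewrite IHn by lia. destruct (Nat.eqb_spec n i); [lia|lra].
Qed.
Lemma rsum_delta' n i g : (i < n)%nat -> rsum n (fun l => if Nat.eqb i l then g l else 0) = g i.
Proof. intros H. rewrite <- (rsum_delta n i g H). apply rsum_ext; intros l _.
  rewrite Nat.eqb_sym; auto. Qed.

Lemma divmod_lemma n i j : (j < n)%nat -> ((i * n + j) / n = i /\ (i * n + j) mod n = j)%nat.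
Proof.
  intros H. assert (n <> 0%nat) by lia. split.
  - rewrite Nat.div_add_l by auto. rewrite Nat.div_small by auto. lia.
  - rewrite Nat.add_comm, Nat.Div0.mod_add. apply Nat.mod_small; auto.
Qed.

Lemma rsum_prod n g h : rsum (n * n) (fun a => g (a / n)%nat * h (a mod n)%nat) = rsum n g * rsum n h.
Proof.
  rewrite rsum_mul. rewrite <- rsum_scal_r. apply rsum_ext; intros i Hi.
  rewrite <- rsum_scal. apply rsum_ext; intros j Hj.
  destruct (divmod_lemma n i j Hj) as [-> ->]. lra.
Qed.

Lemma rsum_le_prod n x y : (forall i, (i < n)%nat -> 0 <= x i) -> (forall i, (i < n)%nat -> 0 <= y i) ->
  rsum n (fun i => x i * y i) <= rsum n x * rsum n y.
Proof.
  intros Hx Hy. rewrite <- rsum_scal_r. apply rsum_le. intros i Hi.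
  apply Rmult_le_compat_l; auto.
  induction n; [lia|]. simpl. destruct (Nat.eq_dec i n) as [->|].
  - assert (0 <= rsum n y) by (apply rsum_nonneg; intros; apply Hy; lia). lra.
  - assert (y i <= rsum n y) by (apply IHn; intros; try apply Hx; try apply Hy; lia).
    assert (0 <= y n) by (apply Hy; lia). lra.
Qed.

Definition ip (n : nat) (x y : vec) : R := rsum n (fun l => x l * y l).

Lemma mvec_ext n X x y : (forall i, (i < n)%nat -> x i = y i) -> forall j, mvec n X x j = mvec n X y j.
Proof. intros H j. unfold mvec. apply rsum_ext; intros; rewrite H; auto. Qed.

Lemma mvec_lin n X a x y j : mvec n X (fun i => a * x i + y i) j = a * mvec n X x j + mvec n X y j.
Proof. unfold mvec. rewrite <- rsum_scal, <- rsum_plus. apply rsum_ext; intros; ring. Qed.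

Lemma mvec_zero n X j : mvec n X (fun _ => 0) j = 0.
Proof. unfold mvec. rewrite (rsum_ext _ _ (fun _ => 0)); [apply rsum_0|intros; ring]. Qed.

Lemma mvec_mmul n X Y v i : mvec n (mmul n X Y) v i = mvec n X (mvec n Y v) i.
Proof.
  unfold mvec, mmul.
  rewrite (rsum_ext n (fun l => rsum n (fun l0 => X i l0 * Y l0 l) * v l)
     (fun l => rsum n (fun l0 => X i l0 * Y l0 l * v l))) by (intros; rewrite <- rsum_scal_r; auto).
  rewrite rsum_swap. apply rsum_ext; intros. rewrite <- rsum_scal. apply rsum_ext; intros; ring.
Qed.

Lemma mvec_idm n x i : (i < n)%nat -> mvec n idm x i = x i.
Proof.
  intros H. unfold mvec, idm.
  rewrite (rsum_ext _ _ (fun l => if Nat.eqb i l then x l else 0)).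
  - apply rsum_delta'; auto.
  - intros l _. destruct (Nat.eqb i l); ring.
Qed.

Lemma ip_trm n X y z : ip n (mvec n (trm X) y) z = ip n y (mvec n X z).
Proof.
  unfold ip, mvec, trm.
  rewrite (rsum_ext n (fun l => rsum n (fun l0 => X l0 l * y l0) * z l)
    (fun l => rsum n (fun l0 => X l0 l * y l0 * z l))) by (intros; rewrite <- rsum_scal_r; auto).
  rewrite rsum_swap. apply rsum_ext; intros. rewrite <- rsum_scal. apply rsum_ext; intros; ring.
Qed.

Lemma ip_comm n x y : ip n x y = ip n y x.
Proof. unfold ip; apply rsum_ext; intros; ring. Qed.

Lemma ip_ext n x x' y y' : (forall i, (i < n)%nat -> x i = x' i) -> (forall i, (i < n)%nat -> y i = y' i) ->
  ip n x y = ip n x' y'.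
Proof. intros H1 H2; unfold ip; apply rsum_ext; intros; rewrite H1, H2; auto. Qed.

Fixpoint av (n : nat) (A : nat -> mat) (w : list nat) (x : vec) : vec :=
  match w with [] => x | s :: w' => av n A w' (mvec n (A s) x) end.

Lemma av_ext n A w x y : (forall i, (i < n)%nat -> x i = y i) -> forall i, (i < n)%nat -> av n A w x i = av n A w y i.
Proof.
  revert x y; induction w as [|s w IH]; simpl; intros x y H i Hi; auto.
  apply IH; auto. intros; apply mvec_ext; auto.
Qed.

Lemma av_lin n A w a x y i : av n A w (fun j => a * x j + y j) i = a * av n A w x i + av n A w y i.
Proof.
  revert x y i; induction w as [|s w IH]; simpl; intros x y i; auto.
  rewrite <- IH. f_equal. apply functional_extensionality. intros j. apply mvec_lin.
Qed.

Lemma av_zero n A w i : av n A w (fun _ => 0) i = 0.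
Proof.
  induction w as [|s w IH]; simpl; auto.
  replace (mvec n (A s) (fun _ => 0)) with (fun _ : nat => 0); auto.
  apply functional_extensionality. intros j. symmetry; apply mvec_zero.
Qed.

Lemma av_Aw n A w x i : (i < n)%nat -> mvec n (Aw n A w) x i = av n A w x i.
Proof.
  revert x i; induction w as [|s w IH]; simpl; intros x i Hi.
  - apply mvec_idm; auto.
  - rewrite mvec_mmul. apply IH; auto.
Qed.

Lemma av_app n A u v x : av n A (u ++ v) x = av n A v (av n A u x).
Proof. revert x; induction u; simpl; auto. Qed.

Definition fsum {T} (L : list T) (f : T -> R) : R := fold_right (fun w acc => f w + acc) 0 L.

Lemma fsum_app {T} (L1 L2 : list T) f : fsum (L1 ++ L2) f = fsum L1 f + fsum L2 f.
Proof. induction L1; simpl; [lra|rewrite IHL1; lra]. Qed.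
Lemma fsum_map {T U} (L : list T) (h : T -> U) f : fsum (map h L) f = fsum L (fun x => f (h x)).
Proof. induction L; simpl; auto. rewrite IHL; auto. Qed.
Lemma fsum_flat_map {T U} (L : list T) (h : T -> list U) f : fsum (flat_map h L) f = fsum L (fun x => fsum (h x) f).
Proof. induction L; simpl; auto. rewrite fsum_app, IHL; auto. Qed.
Lemma fsum_ext {T} (L : list T) f g : (forall x, In x L -> f x = g x) -> fsum L f = fsum L g.
Proof. induction L; simpl; intros H; auto. rewrite H, IHL; auto. Qed.
Lemma fsum_le {T} (L : list T) f g : (forall x, In x L -> f x <= g x) -> fsum L f <= fsum L g.
Proof. induction L; simpl; intros H; [lra|]. assert (f a <= g a) by auto.
  assert (fsum L f <= fsum L g) by auto. lra. Qed.
Lemma fsum_nonneg {T} (L : list T) f : (forall x, In x L -> 0 <= f x) -> 0 <= fsum L f.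
Proof. induction L; simpl; intros H; [lra|]. assert (0 <= f a) by auto.
  assert (0 <= fsum L f) by auto. lra. Qed.
Lemma fsum_scal {T} (L : list T) c f : fsum L (fun x => c * f x) = c * fsum L f.
Proof. induction L; simpl; [lra|rewrite IHL; lra]. Qed.
Lemma fsum_plus {T} (L : list T) f g : fsum L (fun x => f x + g x) = fsum L f + fsum L g.
Proof. induction L; simpl; [lra|rewrite IHL; lra]. Qed.
Lemma fsum_abs {T} (L : list T) f : Rabs (fsum L f) <= fsum L (fun x => Rabs (f x)).
Proof. induction L; simpl. - rewrite Rabs_R0; lra.
  - eapply Rle_trans; [apply Rabs_triang|]. lra. Qed.
Lemma fsum_rsum {T} (L : list T) N g : fsum L (fun w => rsum N (g w)) = rsum N (fun a => fsum L (fun w => g w a)).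
Proof. induction L; simpl. - rewrite rsum_0; auto. - rewrite IHL, rsum_plus; auto. Qed.
Lemma rsum_fsum_seq N g : rsum N g = fsum (seq 0 N) g.
Proof. induction N; [reflexivity|]. rewrite seq_S, fsum_app, <- IHN. simpl; lra. Qed.

Lemma fsum_incl {T} (L L' : list T) f : (forall x, 0 <= f x) -> NoDup L -> (forall x, In x L -> In x L') ->
  fsum L f <= fsum L' f.
Proof.
  revert L'; induction L as [|a L IH]; intros L' Hf HN Hi; simpl.
  - apply fsum_nonneg; auto.
  - assert (In a L') as Ha by (apply Hi; left; auto).
    destruct (in_split _ _ Ha) as [l1 [l2 ->]].
    inversion HN; subst.
    assert (fsum L f <= fsum (l1 ++ l2) f).
    { apply IH; auto. intros x Hx. assert (In x (l1 ++ a :: l2)) as H' by (apply Hi; right; auto).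
      apply in_app_or in H'. apply in_or_app. destruct H' as [H'|[H'|H']]; auto.
      subst; contradiction. }
    rewrite fsum_app in *. simpl. lra.
Qed.

Fixpoint words (m k : nat) : list (list nat) :=
  match k with O => [[]] | S k' => flat_map (fun s => map (cons s) (words m k')) (seq 0 m) end.

Lemma words_spec m k w : In w (words m k) <-> (length w = k /\ word_over m w).
Proof.
  revert w; induction k as [|k IH]; intros w; simpl.
  - split. + intros [<-|[]]; split; auto. constructor.
    + intros [H _]. destruct w; simpl in H; [left; auto|lia].
  - rewrite in_flat_map. split.
    + intros [s [Hs Hw]]. apply in_map_iff in Hw. destruct Hw as [w' [<- Hw']].
      apply IH in Hw'. destruct Hw' as [Hl Ho]. apply in_seq in Hs. split; simpl; auto.
      constructor; auto; lia.
    + intros [Hl Ho]. destruct w as [|s w']; simpl in Hl; [lia|].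
      inversion Ho; subst. exists s. split; [apply in_seq; lia|].
      apply in_map. apply IH; split; auto.
Qed.

Lemma NoDup_flat_map_cons {T} (L : list T) (h : T -> list (list T)) :
  NoDup L -> (forall x, NoDup (h x)) -> (forall x w, In w (h x) -> exists w', w = x :: w') ->
  NoDup (flat_map h L).
Proof.
  induction L as [|a L IH]; simpl; intros HN Hh Hf; [constructor|].
  inversion HN; subst. apply NoDup_app; auto.
  intros w Hw Hw'. apply in_flat_map in Hw'. destruct Hw' as [b [Hb Hwb]].
  destruct (Hf a w Hw) as [w1 ->]. destruct (Hf b _ Hwb) as [w2 E]. injection E; intros; subst.
  contradiction.
Qed.

Lemma NoDup_map_cons {T} (s : T) L : NoDup L -> NoDup (map (cons s) L).
Proof. intros H. apply Injective_map_NoDup; auto. intros x y E; injection E; auto. Qed.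

Lemma words_NoDup m k : NoDup (words m k).
Proof.
  induction k; simpl. - constructor; [intros []|constructor].
  - apply NoDup_flat_map_cons. + apply seq_NoDup. + intros; apply NoDup_map_cons; auto.
    + intros x w Hw. apply in_map_iff in Hw. destruct Hw as [w' [<- _]]. eauto.
Qed.

Fixpoint allw (m K : nat) : list (list nat) :=
  match K with O => [] | S K' => allw m K' ++ words m K' end.

Lemma allw_spec m K w : In w (allw m K) <-> ((length w < K)%nat /\ word_over m w).
Proof.
  induction K; simpl. - split; [intros []|lia].
  - rewrite in_app_iff, IHK, words_spec. split.
    + intros [[H1 H2]|[H1 H2]]; split; auto; lia.
    + intros [H1 H2]. destruct (Nat.eq_dec (length w) K); [right|left]; split; auto; lia.
Qed.

Lemma allw_NoDup m K : NoDup (allw m K).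
Proof.
  induction K; simpl; [constructor|]. apply NoDup_app; auto. apply words_NoDup.
  intros w H1 H2. apply allw_spec in H1. apply words_spec in H2. lia.
Qed.

Lemma rsum_allw m K g : rsum K (fun k => fsum (words m k) g) = fsum (allw m K) g.
Proof. induction K; simpl; auto. rewrite fsum_app, IHK; auto. Qed.

Definition qb (n : nat) (z : vec) (u v : vec) : R :=
  rsum (n * n) (fun a => z a * u (a / n)%nat * v (a mod n)%nat).

Lemma qb_step m n A z u v :
  qb n (mvec (n * n) (stab_mat m n A) z) u v =
  rsum m (fun s => qb n z (mvec n (A s) u) (mvec n (A s) v)).
Proof.
  unfold qb.
  transitivity (rsum (n*n) (fun b => rsum m (fun s =>
     z b * (mvec n (A s) u (b / n)%nat * mvec n (A s) v (b mod n)%nat)))).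
  - transitivity (rsum (n*n) (fun a => rsum (n*n) (fun b =>
        stab_mat m n A a b * z b * u (a / n)%nat * v (a mod n)%nat))).
    + apply rsum_ext; intros a _. unfold mvec at 1.
      rewrite <- !rsum_scal_r. apply rsum_ext; intros; ring.
    + rewrite rsum_swap. apply rsum_ext; intros b _.
      unfold stab_mat, kron, trm.
      transitivity (rsum (n*n) (fun a => rsum m (fun s =>
         A s (b / n)%nat (a / n)%nat * A s (b mod n)%nat (a mod n)%nat * z b * u (a / n)%nat * v (a mod n)%nat))).
      * apply rsum_ext; intros a _. rewrite <- !rsum_scal_r. reflexivity.
      * rewrite rsum_swap. apply rsum_ext; intros s _.
        transitivity (z b * rsum (n*n) (fun a => (A s (b / n)%nat (a / n)%nat * u (a / n)%nat) *
            (A s (b mod n)%nat (a mod n)%nat * v (a mod n)%nat))).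
        -- rewrite <- rsum_scal. apply rsum_ext; intros; ring.
        -- rewrite (rsum_prod n (fun l => A s (b / n)%nat l * u l) (fun l => A s (b mod n)%nat l * v l)).
           reflexivity.
  - rewrite rsum_swap. apply rsum_ext; intros s _. apply rsum_ext; intros; ring.
Qed.

Lemma qb_iter m n A k z u v :
  qb n (Nat.iter k (mvec (n * n) (stab_mat m n A)) z) u v =
  fsum (words m k) (fun w => qb n z (av n A w u) (av n A w v)).
Proof.
  revert u v; induction k as [|k IH]; intros u v.
  - simpl. lra.
  - change (Nat.iter (S k) (mvec (n * n) (stab_mat m n A)) z) with
      (mvec (n * n) (stab_mat m n A) (Nat.iter k (mvec (n * n) (stab_mat m n A)) z)).
    rewrite qb_step. simpl words. rewrite fsum_flat_map, <- rsum_fsum_seq.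
    apply rsum_ext; intros s _. rewrite IH, fsum_map. reflexivity.
Qed.

Lemma qb_unit n z i : (i < n * n)%nat ->
  qb n z (fun l => if Nat.eqb l (i / n) then 1 else 0) (fun l => if Nat.eqb l (i mod n) then 1 else 0) = z i.
Proof.
  intros Hi. assert (Hn : n <> 0%nat) by (intro; subst; simpl in Hi; lia).
  assert (Hd : (i / n < n)%nat) by (apply Nat.Div0.div_lt_upper_bound; lia).
  assert (Hm : (i mod n < n)%nat) by (apply Nat.mod_upper_bound; auto).
  unfold qb. rewrite rsum_mul.
  rewrite (rsum_ext n _ (fun a1 => if Nat.eqb a1 (i / n) then z (a1 * n + i mod n)%nat else 0)).
  - rewrite rsum_delta by auto. f_equal. rewrite Nat.mul_comm. symmetry; apply Nat.div_mod; auto.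
  - intros a1 Ha1. rewrite (rsum_ext n _ (fun a2 => if Nat.eqb a2 (i mod n) then
        (if Nat.eqb a1 (i / n) then z (a1 * n + a2)%nat else 0) else 0)).
    + rewrite rsum_delta by auto. reflexivity.
    + intros a2 Ha2. destruct (divmod_lemma n a1 a2 Ha2) as [-> ->].
      destruct (Nat.eqb a1 (i / n)), (Nat.eqb a2 (i mod n)); ring.
Qed.

Lemma qb_sq n p C u : qb n (fun a => rsum p (fun i => C i (a / n)%nat * C i (a mod n)%nat)) u u =
  sqnorm p (mvec n C u).
Proof.
  unfold qb, sqnorm, mvec.
  transitivity (rsum (n * n) (fun a => rsum p (fun i => (C i (a / n)%nat * u (a / n)%nat) * (C i (a mod n)%nat * u (a mod n)%nat)))).
  - apply rsum_ext; intros a _. rewrite <- !rsum_scal_r. apply rsum_ext; intros; ring.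
  - rewrite rsum_swap. apply rsum_ext; intros i _.
    rewrite (rsum_prod n (fun l => C i l * u l) (fun l => C i l * u l)). reflexivity.
Qed.

Lemma qb_bound n z u v : Rabs (qb n z u v) <=
  rsum (n * n) (fun a => Rabs (z a) * ((u (a / n)%nat) ^ 2 + (v (a mod n)%nat) ^ 2) / 2).
Proof.
  unfold qb. eapply Rle_trans; [apply rsum_abs|]. apply rsum_le; intros a _.
  rewrite !Rabs_mult. assert (0 <= Rabs (z a)) by apply Rabs_pos.
  assert (Rabs (u (a / n)%nat) * Rabs (v (a mod n)%nat) <= ((u (a / n)%nat) ^ 2 + (v (a mod n)%nat) ^ 2) / 2).
  { rewrite <- (pow2_abs (u _)), <- (pow2_abs (v _)).
    set (x := Rabs (u (a / n)%nat)). set (y := Rabs (v (a mod n)%nat)).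
    assert (0 <= (x - y) * (x - y)) by apply Rle_0_sqr. simpl. lra. }
  unfold Rdiv. rewrite Rmult_assoc. rewrite Rmult_assoc in *. nra.
Qed.

Lemma rsum_term n f i : (forall l, (l < n)%nat -> 0 <= f l) -> (i < n)%nat -> f i <= rsum n f.
Proof.
  induction n; intros H Hi; [lia|]. simpl. destruct (Nat.eq_dec i n) as [->|].
  - assert (0 <= rsum n f) by (apply rsum_nonneg; intros; apply H; lia). lra.
  - assert (f i <= rsum n f) by (apply IHn; intros; try apply H; lia).
    assert (0 <= f n) by (apply H; lia). lra.
Qed.

Lemma sqnorm_nonneg p v : 0 <= sqnorm p v.
Proof. unfold sqnorm. apply rsum_nonneg; intros. apply Rle_0_sqr. Qed.

Definition maxlen (L : list (list nat)) : nat := fold_right (fun w acc => Nat.max (length w) acc) 0%nat L.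
Lemma maxlen_spec L w : In w L -> (length w <= maxlen L)%nat.
Proof. induction L; simpl; intros H; [contradiction|]. destruct H as [->|H]; [lia|].
  specialize (IHL H). lia. Qed.

Lemma rep_av m p q S n A B C j w : is_rep m p q S n A B C -> (j < q)%nat -> word_over m w ->
  forall i, (i < p)%nat -> S j w i = mvec n C (av n A w (B j)) i.
Proof.
  intros HR Hj Hw i Hi. rewrite HR by auto. apply mvec_ext. intros; apply av_Aw; auto.
Qed.

Lemma part1 m p q S n A B C : is_rep m p q S n A B C ->
  (forall z, exists Kc, forall K, rsum K (fun k => rsum (n * n)
      (fun i => Rabs (Nat.iter k (mvec (n * n) (stab_mat m n A)) z i))) <= Kc) ->
  square_summable m p q S.
Proof.
  intros HR Hkey j Hj.
  set (z0 := fun a => rsum p (fun i => C i (a / n)%nat * C i (a mod n)%nat)).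
  destruct (Hkey z0) as [Kc HKc].
  set (Kb := rsum (n * n) (fun a => ((B j (a / n)%nat) ^ 2 + (B j (a mod n)%nat) ^ 2) / 2)).
  assert (HKb0 : 0 <= Kb).
  { apply rsum_nonneg; intros. assert (0 <= B j (i / n)%nat ^ 2) by apply pow2_ge_0.
    assert (0 <= B j (i mod n)%nat ^ 2) by apply pow2_ge_0. lra. }
  exists (Kb * Kc). intros L HN HF.
  assert (HF' : forall w, In w L -> word_over m w) by (rewrite Forall_forall in HF; auto).
  set (g := fun w => sqnorm p (mvec n C (av n A w (B j)))).
  change (fsum L (fun w => sqnorm p (S j w)) <= Kb * Kc).
  rewrite (fsum_ext L _ g).
  2:{ intros w Hw. unfold g, sqnorm. apply rsum_ext. intros i Hi.
      rewrite (rep_av m p q S n A B C j w HR Hj) by auto. reflexivity. }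
  eapply Rle_trans.
  { apply (fsum_incl L (allw m ((maxlen L + 1)%nat))).
    - intros; apply sqnorm_nonneg.
    - auto.
    - intros w Hw. apply allw_spec. split. + pose proof (maxlen_spec L w Hw); lia.
      + auto. }
  rewrite <- rsum_allw.
  eapply Rle_trans; [|apply Rmult_le_compat_l; [apply HKb0|apply (HKc ((maxlen L + 1)%nat))]].
  rewrite <- rsum_scal. apply rsum_le. intros k _.
  rewrite (fsum_ext _ _ (fun w => qb n z0 (av n A w (B j)) (av n A w (B j)))).
  2:{ intros w _. unfold g, z0. rewrite qb_sq. reflexivity. }
  rewrite <- qb_iter.
  eapply Rle_trans; [apply Rle_abs|]. eapply Rle_trans; [apply qb_bound|].
  rewrite <- rsum_scal. apply rsum_le. intros a Ha.
  assert (((B j (a / n)%nat) ^ 2 + (B j (a mod n)%nat) ^ 2) / 2 <= Kb).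
  { apply (rsum_term (n * n) (fun a => ((B j (a / n)%nat) ^ 2 + (B j (a mod n)%nat) ^ 2) / 2)); auto.
    intros; assert (0 <= B j (l / n)%nat ^ 2) by apply pow2_ge_0.
    assert (0 <= B j (l mod n)%nat ^ 2) by apply pow2_ge_0. lra. }
  pose proof (Rabs_pos (Nat.iter k (mvec (n * n) (stab_mat m n A)) z0 a)).
  unfold Rdiv in *. rewrite Rmult_assoc. nra.
Qed.

Definition skip (k i : nat) : nat := if Nat.ltb i k then i else Datatypes.S i.

Lemma rsum_skip n k f : (k < n)%nat -> rsum n f = f k + rsum (n - 1) (fun i => f (skip k i)).
Proof.
  induction n as [|n IH]; intros Hk; [lia|].
  replace (Datatypes.S n - 1)%nat with n by lia. simpl rsum at 1.
  destruct (Nat.eq_dec k n) as [->|Hne].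
  - rewrite (rsum_ext n (fun i => f (skip n i)) f). lra. intros i Hi. unfold skip. destruct (Nat.ltb_spec i n); [auto|lia].
  - rewrite IH by lia. destruct n as [|n']; [lia|].
    replace (Datatypes.S n' - 1)%nat with n' by lia. simpl rsum.
    unfold skip at 3. destruct (Nat.ltb_spec n' k); [lia|]. lra.
Qed.

Lemma rsum_delta_gen n i (c : nat -> R) : (i < n)%nat ->
  rsum n (fun j => (if Nat.eqb i j then 1 else 0) * c j) = c i.
Proof.
  intros H. rewrite <- (rsum_delta' n i c H). apply rsum_ext; intros j _.
  destruct (Nat.eqb i j); ring.
Qed.

Section Reduce.
Variables (m p q : nat) (S : nat -> list nat -> vec) (n : nat) (A : nat -> mat) (B : nat -> vec) (C : mat)
  (phi : vec) (k : nat).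
Hypotheses (HR : is_rep m p q S n A B C) (Hk : (k < n)%nat) (Hphi : phi k <> 0)
  (Horth : forall u j, (j < q)%nat -> word_over m u -> ip n phi (av n A u (B j)) = 0).

Let Pm : mat := fun l j => if Nat.ltb l k then (if Nat.eqb l j then 1 else 0)
  else if Nat.eqb l k then - phi (skip k j) / phi k else (if Nat.eqb (l - 1) j then 1 else 0).
Let Qv (x : vec) : vec := fun i => x (skip k i).
Let A' (s : nat) : mat := fun i j => rsum n (fun l => A s (skip k i) l * Pm l j).
Let B' (j : nat) : vec := Qv (B j).
Let C' : mat := fun i j => rsum n (fun l => C i l * Pm l j).

Lemma Pm_Q x : ip n phi x = 0 -> forall l, (l < n)%nat -> mvec (n - 1) Pm (Qv x) l = x l.
Proof.
  intros H0 l Hl. unfold mvec, Pm, Qv.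
  destruct (Nat.ltb_spec l k).
  - rewrite rsum_delta_gen by lia. unfold skip. destruct (Nat.ltb_spec l k); [auto|lia].
  - destruct (Nat.eqb_spec l k) as [->|Hne].
    + unfold ip in H0. rewrite (rsum_skip n k) in H0 by auto.
      rewrite (rsum_ext _ _ (fun i => (-1 / phi k) * (phi (skip k i) * x (skip k i)))).
      * rewrite rsum_scal. field_simplify; [|auto]. apply Rmult_eq_reg_l with (phi k); auto.
        field_simplify; auto. lra.
      * intros; field; auto.
    + rewrite rsum_delta_gen by lia. unfold skip. destruct (Nat.ltb_spec (l - 1) k); [lia|].
      f_equal; lia.
Qed.

Lemma mvec_A' s y i : mvec (n - 1) (A' s) y i = rsum n (fun l => A s (skip k i) l * mvec (n - 1) Pm y l).
Proof.
  unfold mvec, A'.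
  rewrite (rsum_ext (n - 1) _ (fun j => rsum n (fun l => A s (skip k i) l * Pm l j * y j)))
    by (intros; rewrite <- rsum_scal_r; auto).
  rewrite rsum_swap. apply rsum_ext; intros. rewrite <- rsum_scal. apply rsum_ext; intros; ring.
Qed.

Lemma mvec_C' y i : mvec (n - 1) C' y i = rsum n (fun l => C i l * mvec (n - 1) Pm y l).
Proof.
  unfold mvec, C'.
  rewrite (rsum_ext (n - 1) _ (fun j => rsum n (fun l => C i l * Pm l j * y j)))
    by (intros; rewrite <- rsum_scal_r; auto).
  rewrite rsum_swap. apply rsum_ext; intros. rewrite <- rsum_scal. apply rsum_ext; intros; ring.
Qed.

Definition goodv (x : vec) := forall u, word_over m u -> ip n phi (av n A u x) = 0.

Lemma skip_lt i : (i < n - 1)%nat -> (skip k i < n)%nat.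
Proof. intros; unfold skip; destruct (Nat.ltb_spec i k); lia. Qed.

Lemma claim_av u : word_over m u -> forall x, goodv x -> forall i, (i < n - 1)%nat ->
  av (n - 1) A' u (Qv x) i = av n A u x (skip k i).
Proof.
  induction u as [|s u IH]; intros Hu x Hx i Hi; simpl; auto.
  inversion Hu; subst.
  rewrite (av_ext (n - 1) A' u _ (Qv (mvec n (A s) x))); auto.
  - apply IH; auto. intros u' Hu'. apply (Hx (s :: u')). constructor; auto.
  - intros i' Hi'. rewrite mvec_A'. unfold Qv at 2, mvec at 2. apply rsum_ext. intros l Hl.
    rewrite Pm_Q; auto. apply (Hx []). constructor.
Qed.

Lemma reduce_rep : is_rep m p q S (n - 1) A' B' C'.
Proof.
  intros j u Hj Hu i Hi.
  rewrite (rep_av m p q S n A B C j u HR Hj Hu i Hi).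
  rewrite (mvec_ext (n - 1) C' _ (av (n - 1) A' u (B' j))) by (intros; apply av_Aw; auto).
  rewrite mvec_C'. unfold mvec at 1. apply rsum_ext. intros l Hl.
  f_equal. rewrite (mvec_ext (n - 1) Pm _ (Qv (av n A u (B j)))).
  - rewrite Pm_Q; auto.
  - intros i' Hi'. unfold B'. rewrite claim_av; auto.
    intros u' Hu'. apply Horth; auto.
Qed.

End Reduce.

Lemma reduce_a m p q S n A B C phi k : is_rep m p q S n A B C -> (k < n)%nat -> phi k <> 0 ->
  (forall u j, (j < q)%nat -> word_over m u -> ip n phi (av n A u (B j)) = 0) ->
  exists A' B' C', is_rep m p q S (n - 1) A' B' C'.
Proof. intros. do 3 eexists. eapply reduce_rep; eauto. Qed.

Definition dualS (S : nat -> list nat -> vec) : nat -> list nat -> vec := fun i w j => S j (rev w) i.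
Definition trA (A : nat -> mat) : nat -> mat := fun s => trm (A s).

Lemma av_adj n A v y z : ip n (av n (trA A) v y) z = ip n y (av n A (rev v) z).
Proof.
  revert y z; induction v as [|s v IH]; intros y z; simpl; auto.
  rewrite IH. unfold trA. rewrite ip_trm, av_app. reflexivity.
Qed.

Lemma word_over_rev m w : word_over m w -> word_over m (rev w).
Proof. intros H. unfold word_over in *. apply Forall_rev; auto. Qed.

Lemma dual_rep m p q S n A B C : is_rep m p q S n A B C ->
  is_rep m q p (dualS S) n (trA A) (fun i l => C i l) (fun j l => B j l).
Proof.
  intros HR i w Hi Hw jj Hjj.
  unfold dualS. rewrite (rep_av m p q S n A B C jj (rev w) HR Hjj (word_over_rev m w Hw) i Hi).
  rewrite (mvec_ext n (fun j l => B j l) _ (av n (trA A) w (fun l => C i l))) by (intros; apply av_Aw; auto).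
  change (ip n (C i) (av n A (rev w) (B jj)) = ip n (B jj) (av n (trA A) w (C i))).
  rewrite (ip_comm n (B jj)), av_adj. reflexivity.
Qed.

Lemma rep_ext m p q S S' n A B C : is_rep m p q S n A B C ->
  (forall j w i, (j < q)%nat -> word_over m w -> (i < p)%nat -> S' j w i = S j w i) ->
  is_rep m p q S' n A B C.
Proof. intros HR H j w Hj Hw i Hi. rewrite H by auto. apply HR; auto. Qed.

Lemma reduce_b m p q S n A B C x k : is_rep m p q S n A B C -> (k < n)%nat -> x k <> 0 ->
  (forall v i, (i < p)%nat -> word_over m v -> mvec n C (av n A v x) i = 0) ->
  exists A' B' C', is_rep m p q S (n - 1) A' B' C'.
Proof.
  intros HR Hk Hx Hobs.
  destruct (reduce_a m q p (dualS S) n (trA A) (fun i l => C i l) (fun j l => B j l) x k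
    (dual_rep m p q S n A B C HR) Hk Hx) as [A'' [B'' [C'' HR'']]].
  - intros u i Hi Hu. rewrite ip_comm, av_adj. apply Hobs; auto. apply word_over_rev; auto.
  - exists (trA A''), (fun j l => C'' j l), (fun i l => B'' i l).
    apply (rep_ext m p q (dualS (dualS S))).
    + apply dual_rep; auto.
    + intros j w i _ _ _. unfold dualS. rewrite rev_involutive. reflexivity.
Qed.

Lemma min_FA m p q S n A B C : minimal_rep m p q S n A B C ->
  forall phi, (forall u j, (j < q)%nat -> word_over m u -> ip n phi (av n A u (B j)) = 0) ->
  forall k, (k < n)%nat -> phi k = 0.
Proof.
  intros [HR Hmin] phi Horth k Hk. destruct (Req_dec (phi k) 0) as [|Hne]; auto.
  destruct (reduce_a m p q S n A B C phi k HR Hk Hne Horth) as [A' [B' [C' H']]].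
  specialize (Hmin _ _ _ _ H'). lia.
Qed.

Lemma min_FB m p q S n A B C : minimal_rep m p q S n A B C ->
  forall x, (forall v i, (i < p)%nat -> word_over m v -> mvec n C (av n A v x) i = 0) ->
  forall k, (k < n)%nat -> x k = 0.
Proof.
  intros [HR Hmin] x Hobs k Hk. destruct (Req_dec (x k) 0) as [|Hne]; auto.
  destruct (reduce_b m p q S n A B C x k HR Hk Hne Hobs) as [A' [B' [C' H']]].
  specialize (Hmin _ _ _ _ H'). lia.
Qed.

Definition lsum (l : list (R * vec)) : vec := fun i => fold_right (fun pr acc => fst pr * snd pr i + acc) 0 l.
Definition span (n : nat) (T : vec -> Prop) (x : vec) : Prop :=
  exists l, Forall (fun pr => T (snd pr)) l /\ forall i, (i < n)%nat -> x i = lsum l i.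

Lemma span_lift (T : vec -> Prop) (t0 : vec) (n' : nat) (l' : list (R * vec)) :
  Forall (fun pr => exists t, T t /\ forall i, snd pr i = t i - (t n' / t0 n') * t0 i) l' ->
  exists l c, Forall (fun pr => T (snd pr)) l /\ forall i, lsum l' i = lsum l i + c * t0 i.
Proof.
  induction l' as [|[a t'] l' IH]; intros HF.
  - exists [], 0. split; [constructor|]. intros; unfold lsum; simpl; ring.
  - inversion HF as [|? ? [t [Ht Ht']] HF']; subst.
    destruct (IH HF') as [l [c [Hl Hc]]].
    exists ((a, t) :: l), (c - a * (t n' / t0 n')). split; [constructor; auto|].
    intros i. unfold lsum in *; simpl in *. rewrite Hc, Ht'. ring.
Qed.

Lemma lsum_last (T : vec -> Prop) (t0 : vec) (n' : nat) (l' : list (R * vec)) :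
  t0 n' <> 0 ->
  Forall (fun pr => exists t, T t /\ forall i, snd pr i = t i - (t n' / t0 n') * t0 i) l' ->
  lsum l' n' = 0.
Proof.
  intros H0. induction l' as [|[a t'] l' IH]; intros HF; unfold lsum in *; simpl; auto.
  inversion HF as [|? ? [t [Ht Ht']] HF']; subst. simpl in Ht'. rewrite IH, Ht' by auto.
  field; auto.
Qed.

Lemma span_all n : forall T : vec -> Prop,
  (forall phi, (forall t, T t -> ip n phi t = 0) -> forall k, (k < n)%nat -> phi k = 0) ->
  forall x, span n T x.
Proof.
  induction n as [|n' IH]; intros T H x.
  - exists []. split; [constructor|]. intros; lia.
  - destruct (classic (exists t0, T t0 /\ t0 n' <> 0)) as [[t0 [Ht0 Hnz]]|Hno].
    2:{ exfalso. set (e := fun i : nat => if Nat.eqb i n' then 1 else 0).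
        assert (e n' = 0) as He.
        { apply (H e); [|lia]. intros t Ht. unfold ip, e.
          rewrite (rsum_ext _ _ (fun l => if Nat.eqb l n' then t l else 0)).
          - rewrite rsum_delta by lia. destruct (Req_dec (t n') 0); auto. exfalso; apply Hno; eauto.
          - intros l _. destruct (Nat.eqb l n'); ring. }
        unfold e in He. rewrite Nat.eqb_refl in He. lra. }
    set (T' := fun t' : vec => exists t, T t /\ forall i, t' i = t i - (t n' / t0 n') * t0 i).
    assert (HT' : forall phi', (forall t', T' t' -> ip n' phi' t' = 0) -> forall k, (k < n')%nat -> phi' k = 0).
    { intros phi' Hphi' k Hk.
      set (phi := fun l => if Nat.ltb l n' then phi' l else - ip n' phi' t0 / t0 n').
      assert (Hrs : forall v, ip n' phi v = ip n' phi' v).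
      { intros v. unfold ip. apply rsum_ext. intros l Hl. unfold phi.
        destruct (Nat.ltb_spec l n'); [auto|lia]. }
      assert (phi k = 0) as Hk0.
      { apply (H phi); [|lia]. intros t Ht.
        assert (Hz : ip n' phi' (fun i => t i - (t n' / t0 n') * t0 i) = 0).
        { apply Hphi'. exists t; split; auto. }
        unfold ip in Hz |- *. simpl rsum.
        rewrite (rsum_ext _ _ (fun l => (1 * (phi' l * t l)) + (- (t n' / t0 n')) * (phi' l * t0 l))) in Hz
          by (intros; ring).
        rewrite rsum_plus, !rsum_scal in Hz.
        change (ip n' phi t + phi n' * t n' = 0). rewrite Hrs. unfold phi.
        rewrite Nat.ltb_irrefl. unfold ip. field_simplify; auto.
        field_simplify in Hz; auto. lra. }
      unfold phi in Hk0. destruct (Nat.ltb_spec k n'); [auto|lia]. }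
    destruct (IH T' HT' (fun i => x i - (x n' / t0 n') * t0 i)) as [l' [Hl' Hx']].
    destruct (span_lift T t0 n' l' Hl') as [l [c [Hl Hc]]].
    exists ((c + x n' / t0 n', t0) :: l). split; [constructor; auto|].
    intros i Hi. unfold lsum at 1; simpl. fold (lsum l i).
    destruct (Nat.eq_dec i n') as [->|Hne].
    + pose proof (lsum_last T t0 n' l' Hnz Hl') as H0. rewrite Hc in H0.
      field_simplify; auto. field_simplify in H0; auto. lra.
    + specialize (Hx' i ltac:(lia)). rewrite Hc in Hx'. lra.
Qed.

Definition bnd (m : nat) (g : list nat -> R) : Prop :=
  exists K, forall W, NoDup W -> Forall (word_over m) W -> fsum W (fun w => (g w) ^ 2) <= K.

Lemma bnd_ext m g g' : (forall w, word_over m w -> g w = g' w) -> bnd m g -> bnd m g'.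
Proof. intros H [K HK]. exists K. intros W H1 H2. rewrite (fsum_ext _ _ (fun w => g w ^ 2)).
  apply HK; auto. intros x Hx; rewrite H; auto. rewrite Forall_forall in H2; auto. Qed.

Lemma bnd_zero m : bnd m (fun _ => 0).
Proof. exists 0. intros W _ _. rewrite (fsum_ext W _ (fun _ => 0)) by (intros; simpl; ring).
  clear; induction W; simpl; lra. Qed.

Lemma bnd_lin m a g1 g2 : bnd m g1 -> bnd m g2 -> bnd m (fun w => a * g1 w + g2 w).
Proof.
  intros [K1 H1] [K2 H2]. exists (2 * a ^ 2 * K1 + 2 * K2). intros W HN HF.
  eapply Rle_trans.
  - apply (fsum_le W _ (fun w => (2 * a ^ 2) * (g1 w ^ 2) + 2 * (g2 w ^ 2))).
    intros w _. assert (0 <= (a * g1 w - g2 w) ^ 2) by apply pow2_ge_0.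
    assert (2 * a ^ 2 * g1 w ^ 2 + 2 * g2 w ^ 2 - (a * g1 w + g2 w) ^ 2 = (a * g1 w - g2 w) ^ 2) by ring.
    lra.
  - rewrite fsum_plus, !fsum_scal. assert (0 <= 2 * a ^ 2) by (pose proof (pow2_ge_0 a); lra).
    specialize (H1 W HN HF). specialize (H2 W HN HF).
    pose proof (Rmult_le_compat_l _ _ _ H H1). lra.
Qed.

Lemma span_bnd m n (T : vec -> Prop) (f : vec -> list nat -> R) :
  (forall x y, (forall i, (i < n)%nat -> x i = y i) -> forall w, f x w = f y w) ->
  (forall a t x w, f (fun i => a * t i + x i) w = a * f t w + f x w) ->
  (forall w, f (fun _ => 0) w = 0) ->
  (forall t, T t -> bnd m (f t)) -> forall x, span n T x -> bnd m (f x).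
Proof.
  intros Hext Hlin H0 HT x [l [Hl Hx]].
  apply (bnd_ext m (f (lsum l))). { intros w _. symmetry; apply Hext; auto. }
  clear Hx. induction l as [|[a t] l IH].
  - apply (bnd_ext m (fun _ => 0)); [intros w _; symmetry; apply H0|apply bnd_zero].
  - inversion Hl; subst. apply (bnd_ext m (fun w => a * f t w + f (lsum l) w)).
    + intros w _. symmetry. apply Hlin.
    + apply bnd_lin; auto.
Qed.

Lemma fin_bound n (P : nat -> R -> Prop) :
  (forall i, (i < n)%nat -> exists K, P i K) -> (forall i K K', P i K -> K <= K' -> P i K') ->
  exists K, forall i, (i < n)%nat -> P i K.
Proof.
  induction n; intros H Hm.
  - exists 0. intros; lia.
  - destruct IHn as [K1 H1]; auto. destruct (H n) as [K2 H2]; auto.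
    exists (Rmax K1 K2). intros i Hi. destruct (Nat.eq_dec i n) as [->|].
    + eapply Hm; eauto. apply Rmax_r.
    + eapply Hm; [apply H1; lia|apply Rmax_l].
Qed.

Definition ev (a : nat) : vec := fun i => if Nat.eqb i a then 1 else 0.

Lemma ip_ev n a y : (a < n)%nat -> ip n (ev a) y = y a.
Proof. intros H. unfold ip, ev. rewrite (rsum_ext _ _ (fun l => if Nat.eqb l a then y l else 0)).
  apply rsum_delta; auto. intros l _; destruct (Nat.eqb l a); ring. Qed.

Lemma sq_le_sqnorm p x i : (i < p)%nat -> (x i) ^ 2 <= sqnorm p x.
Proof. intros H. unfold sqnorm. replace ((x i) ^ 2) with (x i * x i) by ring.
  apply (rsum_term p (fun i => x i * x i)); auto. intros; apply Rle_0_sqr. Qed.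

Lemma part2_bound m p q S n A B C : square_summable m p q S -> minimal_rep m p q S n A B C ->
  exists K, forall a b, (a < n)%nat -> (b < n)%nat -> forall W, NoDup W -> Forall (word_over m) W ->
    fsum W (fun w => (av n A w (ev a) b) ^ 2) <= K.
Proof.
  intros HSS Hmin. pose proof Hmin as [HR _].
  set (reach := fun t : vec => exists u j, (j < q)%nat /\ word_over m u /\ t = av n A u (B j)).
  set (obsv := fun t : vec => exists v i, (i < p)%nat /\ word_over m v /\ t = av n (trA A) v (C i)).
  assert (Hsr : forall x, span n reach x).
  { apply span_all. intros phi H. apply (min_FA m p q S n A B C Hmin). intros u j Hj Hu.
    apply H. exists u, j; auto. }
  assert (Hso : forall x, span n obsv x).
  { apply span_all. intros phi H. apply (min_FB m p q S n A B C Hmin). intros v i Hi Hv.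
    change (ip n (C i) (av n A v phi) = 0).
    assert (E : ip n (C i) (av n A v phi) = ip n phi (av n (trA A) (rev v) (C i)))
      by (rewrite (ip_comm n phi), av_adj, rev_involutive; reflexivity).
    rewrite E. apply H. exists (rev v), i. repeat split; auto. apply word_over_rev; auto. }
  assert (Base : forall u j v i, (j < q)%nat -> word_over m u -> (i < p)%nat -> word_over m v ->
     bnd m (fun w => ip n (av n (trA A) v (C i)) (av n A w (av n A u (B j))))).
  { intros u j v i Hj Hu Hi Hv.
    apply (bnd_ext m (fun w => S j (u ++ w ++ rev v) i)).
    - intros w Hw. rewrite av_adj, <- !av_app.
      apply (rep_av m p q S n A B C); auto.
      repeat (apply Forall_app; split); auto. apply word_over_rev; auto.
    - destruct (HSS j Hj) as [K HK]. exists K. intros W HN HF.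
      eapply Rle_trans.
      + apply (fsum_le W _ (fun w => sqnorm p (S j (u ++ w ++ rev v)))). intros; apply sq_le_sqnorm; auto.
      + rewrite <- (fsum_map W (fun w => u ++ w ++ rev v) (fun w => sqnorm p (S j w))).
        apply HK.
        * apply Injective_map_NoDup; auto. intros w1 w2 E.
          apply app_inv_head in E. apply app_inv_tail in E. auto.
        * apply Forall_map. eapply Forall_impl; [|apply HF]. intros w Hw.
          repeat (apply Forall_app; split); auto. apply word_over_rev; auto. }
  assert (Step2 : forall x v i, (i < p)%nat -> word_over m v ->
     bnd m (fun w => ip n (av n (trA A) v (C i)) (av n A w x))).
  { intros x v i Hi Hv.
    apply (span_bnd m n reach (fun x w => ip n (av n (trA A) v (C i)) (av n A w x))).
    - intros x1 x2 Hx w. apply ip_ext; auto. intros; apply av_ext; auto.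
    - intros a t x' w. unfold ip.
      rewrite (rsum_ext n _ (fun l => a * (av n (trA A) v (C i) l * av n A w t l)
                 + av n (trA A) v (C i) l * av n A w x' l)).
      + rewrite rsum_plus, rsum_scal; reflexivity.
      + intros l _. rewrite av_lin. ring.
    - intros w. unfold ip. rewrite (rsum_ext _ _ (fun _ => 0)); [apply rsum_0|].
      intros l _. rewrite av_zero; ring.
    - intros t [u [j [Hj [Hu ->]]]]. apply Base; auto.
    - apply Hsr. }
  assert (Step3 : forall x b, (b < n)%nat -> bnd m (fun w => av n A w x b)).
  { intros x b Hb. apply (bnd_ext m (fun w => ip n (ev b) (av n A w x))).
    { intros w _. apply ip_ev; auto. }
    apply (span_bnd m n obsv (fun eta w => ip n eta (av n A w x))).
    - intros e1 e2 He w. apply ip_ext; auto.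
    - intros a t e w. unfold ip.
      rewrite (rsum_ext n _ (fun l => a * (t l * av n A w x l) + e l * av n A w x l)) by (intros; ring).
      rewrite rsum_plus, rsum_scal; reflexivity.
    - intros w. unfold ip. rewrite (rsum_ext _ _ (fun _ => 0)) by (intros; ring). apply rsum_0.
    - intros t [v [i [Hi [Hv ->]]]]. apply Step2; auto.
    - apply Hso. }
  destruct (fin_bound n (fun a K => forall b, (b < n)%nat -> forall W, NoDup W -> Forall (word_over m) W ->
      fsum W (fun w => (av n A w (ev a) b) ^ 2) <= K)) as [K HK].
  - intros a Ha. apply (fin_bound n (fun b K => forall W, NoDup W -> Forall (word_over m) W ->
      fsum W (fun w => (av n A w (ev a) b) ^ 2) <= K)).
    + intros b Hb. apply Step3; auto.
    + intros b K K' H1 H2 W HN HF. eapply Rle_trans; [apply H1|]; auto.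
  - intros a K K' H1 H2 b Hb W HN HF. eapply Rle_trans; [apply H1|]; auto.
  - exists K. intros a b Ha Hb. apply HK; auto.
Qed.

Lemma mvec_lin2 n X a b x y i : mvec n X (fun j => a * x j + b * y j) i = a * mvec n X x i + b * mvec n X y i.
Proof. unfold mvec. rewrite <- !rsum_scal, <- rsum_plus. apply rsum_ext; intros; ring. Qed.

Lemma rsum_const n c : rsum n (fun _ => c) = INR n * c.
Proof. induction n; simpl rsum. - simpl; ring. - rewrite IHn, S_INR; ring. Qed.

Lemma iter_bound m n A K z i0 :
  (i0 < n * n)%nat ->
  (forall a b, (a < n)%nat -> (b < n)%nat -> forall W, NoDup W -> Forall (word_over m) W ->
    fsum W (fun w => (av n A w (ev a) b) ^ 2) <= K) ->
  forall K', rsum K' (fun k => Rabs (Nat.iter k (mvec (n * n) (stab_mat m n A)) z i0)) <=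
    rsum (n * n) (fun c => Rabs (z c)) * K.
Proof.
  intros Hi0 HK K'.
  assert (Hn : n <> 0%nat) by (intro; subst; simpl in Hi0; lia).
  set (i1 := (i0 / n)%nat). set (i2 := (i0 mod n)%nat).
  assert (Hi1 : (i1 < n)%nat) by (apply Nat.Div0.div_lt_upper_bound; lia).
  assert (Hi2 : (i2 < n)%nat) by (apply Nat.mod_upper_bound; auto).
  set (W := allw m K').
  assert (HW : NoDup W) by apply allw_NoDup.
  assert (HWF : Forall (word_over m) W).
  { apply Forall_forall. intros w Hw. apply allw_spec in Hw. tauto. }
  eapply Rle_trans.
  { apply rsum_le. intros k _. rewrite <- (qb_unit n _ i0 Hi0). rewrite qb_iter.
    eapply Rle_trans; [apply fsum_abs|]. apply fsum_le. intros w _. apply qb_bound. }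
  rewrite rsum_allw. fold W. rewrite fsum_rsum, <- rsum_scal_r. apply rsum_le. intros c Hc.
  assert (Hc1 : (c / n < n)%nat) by (apply Nat.Div0.div_lt_upper_bound; lia).
  assert (Hc2 : (c mod n < n)%nat) by (apply Nat.mod_upper_bound; auto).
  rewrite (fsum_ext W _ (fun w => (Rabs (z c) / 2) * (av n A w (fun l => if Nat.eqb l i1 then 1 else 0) (c / n)%nat ^ 2)
      + (Rabs (z c) / 2) * (av n A w (fun l => if Nat.eqb l i2 then 1 else 0) (c mod n)%nat ^ 2)))
    by (intros; unfold i1, i2; field).
  rewrite fsum_plus, !fsum_scal.
  pose proof (HK i1 (c / n)%nat Hi1 Hc1 W HW HWF) as H1.
  pose proof (HK i2 (c mod n)%nat Hi2 Hc2 W HW HWF) as H2.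
  unfold ev in H1, H2.
  pose proof (Rabs_pos (z c)).
  assert (0 <= Rabs (z c) / 2) by lra.
  pose proof (Rmult_le_compat_l _ _ _ H0 H1). pose proof (Rmult_le_compat_l _ _ _ H0 H2). lra.
Qed.

Lemma part2 m p q S n A B C : square_summable m p q S -> minimal_rep m p q S n A B C -> stable m n A.
Proof.
  intros HSS Hmin a b [x [y [[k0 [Hk0 Hnz]] Heq]]].
  destruct (part2_bound m p q S n A B C HSS Hmin) as [K HK].
  set (N := (n * n)%nat) in *. set (M := stab_mat m n A) in *.
  destruct (Rlt_or_le (a * a + b * b) 1) as [|Hge]; auto. exfalso.
  assert (Hn : (0 < n)%nat) by (destruct n; simpl in Hk0; unfold N in Hk0; simpl in Hk0; lia).
  assert (HK0 : 0 <= K).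
  { eapply Rle_trans; [|apply (HK 0%nat 0%nat Hn Hn [] (NoDup_nil _) (Forall_nil _))]. simpl; lra. }
  set (X := fun k => Nat.iter k (mvec N M) x). set (Y := fun k => Nat.iter k (mvec N M) y).
  assert (Hrec : forall k i, (i < N)%nat -> mvec N M (X k) i = a * X k i - b * Y k i /\
                                            mvec N M (Y k) i = b * X k i + a * Y k i).
  { induction k as [|k IH]; intros i Hi; [apply Heq; auto|].
    change (X (Datatypes.S k)) with (mvec N M (X k)). change (Y (Datatypes.S k)) with (mvec N M (Y k)).
    rewrite (mvec_ext N M (mvec N M (X k)) (fun j => a * X k j + (- b) * Y k j))
      by (intros j Hj; destruct (IH j Hj) as [E _]; rewrite E; ring).
    rewrite (mvec_ext N M (mvec N M (Y k)) (fun j => b * X k j + a * Y k j))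
      by (intros j Hj; destruct (IH j Hj) as [_ E]; rewrite E; ring).
    rewrite !mvec_lin2. destruct (IH i Hi) as [E1 E2]. rewrite E1, E2. split; ring. }
  assert (Hnorm : forall k, X k k0 ^ 2 + Y k k0 ^ 2 = (a * a + b * b) ^ k * (x k0 ^ 2 + y k0 ^ 2)).
  { induction k as [|k IH]; [simpl; ring|].
    change (X (Datatypes.S k) k0) with (mvec N M (X k) k0).
    change (Y (Datatypes.S k) k0) with (mvec N M (Y k) k0).
    destruct (Hrec k k0 Hk0) as [E1 E2]. rewrite E1, E2.
    replace ((a * a + b * b) ^ Datatypes.S k) with ((a * a + b * b) * (a * a + b * b) ^ k) by (simpl; ring).
    rewrite Rmult_assoc, <- IH. ring. }
  set (c0 := x k0 ^ 2 + y k0 ^ 2).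
  assert (Hc0 : 0 < c0).
  { unfold c0. destruct Hnz as [Hx|Hy].
    - assert (0 < x k0 ^ 2) by (apply pow2_gt_0 || (simpl; nra)). pose proof (pow2_ge_0 (y k0)); lra.
    - assert (0 < y k0 ^ 2) by (simpl; nra). pose proof (pow2_ge_0 (x k0)); lra. }
  assert (Hlow : forall k, c0 <= X k k0 ^ 2 + Y k k0 ^ 2).
  { intros k. rewrite Hnorm. pose proof (pow_R1_Rle _ k Hge). unfold c0 in *. nra. }
  set (D := (rsum N (fun c => Rabs (x c)) + rsum N (fun c => Rabs (y c))) * K).
  set (s := fun k => Rabs (X k k0) + Rabs (Y k k0)).
  assert (Hsum : forall K', rsum K' s <= D).
  { intros K'. unfold s, D. rewrite rsum_plus, Rmult_plus_distr_r.
    pose proof (iter_bound m n A K x k0 Hk0 HK K'). pose proof (iter_bound m n A K y k0 Hk0 HK K').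
    unfold X, Y, N, M in *. lra. }
  assert (HD : 0 <= D) by (unfold D; apply Rmult_le_pos; auto;
    apply Rplus_le_le_0_compat; apply rsum_nonneg; intros; apply Rabs_pos).
  assert (Hs_le : forall k, s k <= D).
  { intros k. eapply Rle_trans; [|apply (Hsum (Datatypes.S k))].
    apply (rsum_term (Datatypes.S k) s k); [|lia]. intros; unfold s.
    pose proof (Rabs_pos (X l k0)); pose proof (Rabs_pos (Y l k0)); lra. }
  assert (Hs_low : forall k, c0 / (D + 1) <= s k).
  { intros k. specialize (Hlow k). specialize (Hs_le k).
    assert (X k k0 ^ 2 + Y k k0 ^ 2 <= s k * s k).
    { unfold s. rewrite <- (pow2_abs (X k k0)), <- (pow2_abs (Y k k0)).
      pose proof (Rabs_pos (X k k0)); pose proof (Rabs_pos (Y k k0)). simpl. nra. }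
    assert (0 <= s k) by (unfold s; pose proof (Rabs_pos (X k k0)); pose proof (Rabs_pos (Y k k0)); lra).
    apply Rmult_le_reg_r with (D + 1); [lra|]. unfold Rdiv. rewrite Rmult_assoc, Rinv_l by lra.
    nra. }
  assert (Heps : c0 / (D + 1) > 0) by (apply Rdiv_lt_0_compat; lra).
  destruct (INR_archimed _ D Heps) as [K' HK'].
  specialize (Hsum K').
  assert (rsum K' (fun _ => c0 / (D + 1)) <= rsum K' s) by (apply rsum_le; intros; auto).
  rewrite rsum_const in H. lra.
Qed.

Set Warnings "-notation-overridden,-ambiguous-paths,-notation-incompatible-prefix".
From Stdlib Require Import Reals.
From HB Require Import structures.
From mathcomp Require Import all_boot all_order all_algebra.
From mathcomp Require Import Rstruct complex.
Set Implicit Arguments. Unset Strict Implicit. Unset Printing Implicit Defensive.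
Import Order.TTheory GRing.Theory Num.Theory.
Local Open Scope ring_scope.
Local Open Scope complex_scope.

Definition nr (z : R[i]) : R := let: a +i* b := z in Num.sqrt (a ^+ 2 + b ^+ 2).
Lemma normE (z : R[i]) : `|z| = (nr z)%:C.
Proof. by case: z => a b; rewrite normc_def. Qed.
Lemma nr_ge0 z : 0 <= nr z. Proof. by case: z => a b; exact: sqrtr_ge0. Qed.
Lemma nrD x y : nr (x + y) <= nr x + nr y.
Proof. by rewrite -lecR rmorphD /= -!normE ler_normD. Qed.
Lemma nrM x y : nr (x * y) = nr x * nr y.
Proof. by apply: (@complexI R); rewrite rmorphM /= -!normE normrM. Qed.
Lemma nrC (x : R) : nr (x%:C) = `|x|.
Proof. by rewrite /nr /= expr0n /= addr0 sqrtr_sqr. Qed.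
Lemma nrN x : nr (- x) = nr x.
Proof. by apply: (@complexI R); rewrite -!normE normrN. Qed.

Definition cn (N : nat) (v : 'rV[R[i]]_N) : R := \sum_(i < N) nr (v 0 i).
Lemma cn_ge0 N (v : 'rV_N) : 0 <= cn v.
Proof. by apply: sumr_ge0 => i _; exact: nr_ge0. Qed.
Lemma cnB N (u w : 'rV_N) : cn (u - w) <= cn u + cn w.
Proof.
rewrite /cn -big_split /=; apply: ler_sum => i _.
by rewrite !mxE -(nrN (w 0 i)); apply: nrD.
Qed.
Lemma cnZ N r (u : 'rV_N) : cn (r *: u) = nr r * cn u.
Proof. by rewrite /cn mulr_sumr; apply: eq_bigr => i _; rewrite !mxE nrM. Qed.
Lemma cn0 N : cn (0 : 'rV[R[i]]_N) = 0.
Proof. by rewrite /cn big1 // => i _; rewrite mxE /nr /= expr0n /= addr0 sqrtr0. Qed.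

Lemma recur N (X : 'M[R[i]]_N.+1) (rs : seq R[i]) :
  (forall r, r \in rs -> nr r < 1) ->
  forall v : 'rV_N.+1, v *m horner_mx X (\prod_(r <- rs) ('X - r%:P)) = 0 ->
  exists K, forall K', \sum_(k < K') cn (v *m X ^+ k) <= K.
Proof.
elim: rs => [|r rs IH] Hr v Hv.
  move: Hv; rewrite big_nil rmorph1 mulmx1 => ->.
  by exists 0 => K'; rewrite big1 // => k _; rewrite mul0mx cn0.
move: Hv; rewrite big_cons rmorphM /= mulmxA => Hv.
have [K1 HK1] : exists K, forall K', \sum_(k < K') cn ((v *m horner_mx X ('X - r%:P)) *m X ^+ k) <= K.
  by apply: IH Hv => r' hr'; apply: Hr; rewrite inE hr' orbT.
have Hr1 : nr r < 1 by apply: Hr; rewrite inE eqxx.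
set w := v *m _ in Hv HK1.
have Hw : forall k, w *m X ^+ k = v *m X ^+ k.+1 - r *: (v *m X ^+ k).
  move=> k; rewrite /w rmorphB /= horner_mx_X horner_mx_C -mulmxA mulmxBl.
  by rewrite mul_scalar_mx mulmxBr scalemxAr exprS -mulmxE.
have step : forall k, cn (v *m X ^+ k.+1) <= nr r * cn (v *m X ^+ k) + cn (w *m X ^+ k).
  move=> k; rewrite Hw -cnZ.
  set a := v *m X ^+ k.+1; set b := r *: _.
  have cnN : cn (- b) = cn b by rewrite /cn; apply: eq_bigr => i _; rewrite !mxE nrN.
  rewrite {1}(_ : a = (a - b) - (- b)); last by rewrite opprK subrK.
  by apply: le_trans (cnB _ _) _; rewrite cnN addrC.
exists ((cn v + K1) / (1 - nr r)) => K'.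
set S := \sum_(k < K') _.
have h1 : \sum_(k < K'.+1) cn (v *m X ^+ k) <= cn v + nr r * S + K1.
  rewrite big_ord_recl /= expr0 mulmx1 -addrA lerD2l.
  apply: le_trans (_ : \sum_(k < K') (nr r * cn (v *m X ^+ k) + cn (w *m X ^+ k)) <= _).
    by apply: ler_sum => k _; apply: step.
  by rewrite big_split /= -mulr_sumr lerD2l HK1.
have h2 : S <= \sum_(k < K'.+1) cn (v *m X ^+ k).
  by rewrite big_ord_recr /= lerDl cn_ge0.
have hd : 0 < 1 - nr r by rewrite subr_gt0.
rewrite ler_pdivlMr //.
have := le_trans h2 h1.
move=> h; rewrite mulrBr mulr1 lerBlDr.
by apply: le_trans h _; rewrite -addrA [_ + K1]addrC addrA lerD2l mulrC.
Qed.

Lemma rsumE n f : rsum n f = \sum_(i < n) f i.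
Proof. by elim: n => [|n IH]; rewrite ?big_ord0 // big_ord_recr /= -IH. Qed.

Lemma Re_add (x y : R[i]) : complex.Re (x + y) = complex.Re x + complex.Re y.
Proof. by case: x; case: y. Qed.
Lemma Im_add (x y : R[i]) : complex.Im (x + y) = complex.Im x + complex.Im y.
Proof. by case: x; case: y. Qed.

Lemma Re_sum n (F : 'I_n -> R[i]) : complex.Re (\sum_(j < n) F j) = \sum_(j < n) complex.Re (F j).
Proof. elim: n F => [|n IH] F; first by rewrite !big_ord0. by rewrite !big_ord_recr Re_add IH. Qed.
Lemma Im_sum n (F : 'I_n -> R[i]) : complex.Im (\sum_(j < n) F j) = \sum_(j < n) complex.Im (F j).
Proof. elim: n F => [|n IH] F; first by rewrite !big_ord0. by rewrite !big_ord_recr Im_add IH. Qed.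

Lemma key N (M : mat) :
  (forall a b, is_eigenvalue N M a b -> Rlt (Rplus (Rmult a a) (Rmult b b)) 1) ->
  forall z, exists Kc, forall K,
   Rle (rsum K (fun k => rsum N (fun i => Rabs (Nat.iter k (mvec N M) z i)))) Kc.
Proof.
case: N => [|N'] H z.
  exists 0 => K; rewrite (_ : rsum K _ = 0); first exact: Rle_refl.
  by rewrite rsumE big1.
set N := N'.+1.
pose G : 'M[R[i]]_N := \matrix_(i < N, j < N) (M j i)%:C.
pose u : 'rV[R[i]]_N := \row_(i < N) (z i)%:C.
have F1 : forall k (i : 'I_N), (u *m G ^+ k) 0 i = (Nat.iter k (mvec N M) z i)%:C.
  elim=> [|k IH] i; first by rewrite expr0 mulmx1 mxE.
  rewrite exprSr mulmxA mxE /= /mvec rsumE rmorph_sum /=.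
  by apply: eq_bigr => j _; rewrite IH mxE rmorphM /= mulrC.
have F2 : forall r, root (char_poly G) r -> nr r < 1.
  move=> r; rewrite -eigenvalue_root_char => /eigenvalueP [v Hv vnz].
  pose x := fun i : nat => complex.Re (v 0 (inord i)).
  pose y := fun i : nat => complex.Im (v 0 (inord i)).
  have Hent : forall i : 'I_N, \sum_(j < N) v 0 j * (M i j)%:C = r * v 0 i.
    move=> i; move/rowP: Hv => /(_ i); rewrite !mxE => <-.
    by apply: eq_bigr => j _; rewrite mxE.
  have Hreal : is_eigenvalue N M (complex.Re r) (complex.Im r).
    exists x, y; split.
      have [i Hi] : exists i, v 0 i != 0.
        apply/existsP; move: vnz; apply: contraR; rewrite negb_exists => /forallP Hall.
        by apply/eqP/rowP => j; rewrite mxE; apply/eqP; move: (Hall j); rewrite negbK.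
      exists (val i); split; first by apply/ssrnat.ltP; exact: ltn_ord.
      rewrite /x /y inord_val; move: Hi; case: (v 0 i) => a b /=.
      case: (Req_EM_T a 0) => [->|]; last by left.
      case: (Req_EM_T b 0) => [->|]; last by right.
      by rewrite eqxx.
    move=> i /ssrnat.ltP Hi; set i' : 'I_N := Ordinal Hi.
    have E := Hent i'.
    have hsum : forall f : nat -> R, rsum N f = \sum_(j < N) f j by move=> f; rewrite rsumE.
    have ii : inord i = i' by apply: val_inj; rewrite /= inordK.
    split.
      have := congr1 (@complex.Re R) E; rewrite Re_sum => E'.
      have -> : mvec N M x i = \sum_(j < N) complex.Re (v 0 j * (M i' j)%:C).
        rewrite /mvec hsum; apply: eq_bigr => j _; rewrite /x inord_val.
        by case: (v 0 j) => c d /=; rewrite mulr0 subr0 mulrC.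
      rewrite E' /x /y ii; case: (r) => a b; case: (v 0 i') => c d /=.
      by rewrite -RminusE -!RmultE.
    have := congr1 (@complex.Im R) E; rewrite Im_sum => E'.
    have -> : mvec N M y i = \sum_(j < N) complex.Im (v 0 j * (M i' j)%:C).
      rewrite /mvec hsum; apply: eq_bigr => j _; rewrite /y inord_val.
      by case: (v 0 j) => c d /=; rewrite mulr0 add0r mulrC.
    rewrite E' /x /y ii; case: (r) => a b; case: (v 0 i') => c d /=.
    by rewrite -RplusE -!RmultE Rplus_comm.
  have := H _ _ Hreal; move: (r) => [a b] /= /RltP hab.
  rewrite -sqrtr1 ltr_sqrt // !expr2.
have [rs Hrs] := closed_field_poly_normal (char_poly G).
rewrite (monicP (char_poly_monic G)) scale1r in Hrs.
have Hu : u *m horner_mx G (\prod_(r <- rs) ('X - r%:P)) = 0.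
  by rewrite -Hrs Cayley_Hamilton mulmx0.
have Hnr : forall r, r \in rs -> nr r < 1.
  by move=> r hr; apply: F2; rewrite Hrs root_prod_XsubC.
have [K HK] := recur Hnr Hu.
exists K => K'; apply/RleP; apply: le_trans (HK K').
rewrite rsumE le_eqVlt; apply/orP; left; apply/eqP; apply: eq_bigr => k _.
rewrite rsumE /cn; apply: eq_bigr => i _; rewrite F1 nrC //.
Qed.

Theorem mainTheorem1 (m p q : nat) (S : nat -> list nat -> vec) :
  ((exists n A B C, is_rep m p q S n A B C /\ stable m n A) ->
     square_summable m p q S) /\
  (square_summable m p q S ->
     forall n A B C, minimal_rep m p q S n A B C -> stable m n A).
Proof.
  split.
  - intros [n [A [B [C [HR Hst]]]]]. apply (part1 m p q S n A B C HR).
    apply key. exact Hst.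
  - intros HSS n A B C Hmin. exact (part2 m p q S n A B C HSS Hmin).
Qed.
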